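(* Let $\vec X^m\in\underline V^h_{\partial_0}$ satisfy assumptions $(\mathfrak A)$ and $(\mathfrak B)^h$, and let $\Delta t_m>0$. Then there exists a unique pair $(\delta\vec X^{m+1},\kappa^{m+1})\in\underline V^h_\partial\times V^h$ such that, with $\vec X^{m+1}=\vec X^m+\delta\vec X^{m+1}$, $$\Big(\tfrac{\vec X^{m+1}-\vec X^m}{\Delta t_m},\chi\,\vec\nu^m|\vec X^m_\rho|\Big)^h=\Big(\kappa^{m+1}-\mathfrak K^m(\kappa^{m+1}),\chi\,|\vec X^m_\rho|\Big)^h\quad\forall\,\chi\in V^h,$$ $$\Big(\kappa^{m+1}\vec\nu^m,\vec\eta\,|\vec X^m_\rho|\Big)^h+\Big(\vec X^{m+1}_\rho,\vec\eta_\rho|\vec X^m_\rho|^{-1}\Big)=-\sum_{i=1}^2\sum_{p\in\partial_iI}\widehat\varrho^{(p)}\,\vec\eta(p)\cdot\vec e_{3-i}\quad\forall\,\vec\eta\in\underline V^h_\partial .$$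
   Context: Setup. $\vec e_1=(1,0)^T$, $\vec e_2=(0,1)^T$; ''$\cdot$'' is the Euclidean inner product. $I$ is either the periodic interval $\mathbb R/\mathbb Z$ (with $\partial I=\emptyset$) or $I=(0,1)$ (with $\partial I=\{0,1\}$). $\partial I=\partial_DI\cup\partial_0I\cup\partial_1I\cup\partial_2I$ is a given disjoint partition, and $\widehat\varrho^{(p)}\in\mathbb R$, $p\in\{0,1\}$, are given constants with $|\widehat\varrho^{(p)}|\le1$. Let $J\ge3$, $h=1/J$, $q_j=jh$ ($j=0,\dots,J$; $q_0=q_J$ identified in the periodic case). $V^h$ is the space of continuous functions on $\overline I$ (periodic if $I=\mathbb R/\mathbb Z$) that are affine on each $[q_{j-1},q_j]$; $\underline V^h=[V^h]^2$; $\underline V^h_{\partial_0}=\{\vec\eta\in\underline V^h:\vec\eta(\rho)\cdot\vec e_1=0\ \forall\rho\in\partial_0I\}$; $\underline V^h_\partial=\{\vec\eta\in\underline V^h_{\partial_0}:\vec\eta(\rho)\cdot\vec e_i=0\ \forall\rho\in\partial_iI,\ i=1,2;\ \vec\eta(\rho)=\vec0\ \forall\rho\in\partial_DI\}$. $(\cdot,\cdot)$ is the $L^2(I)$ inner product (with dot product for vector functions), and for piecewise continuous $f,g$ (possibly discontinuous at nodes) the mass-lumped product is $(f,g)^h=\tfrac h2\sum_{j=1}^J[(fg)(q_j^-)+(fg)(q_{j-1}^+)]$. For $\vec X^m\in\underline V^h_{\partial_0}$ with $|\vec X^m_\rho|>0$ a.e., set $\vec\nu^m=-[\vec X^m_\rho]^\perp/|\vec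 X^m_\rho|$, where $(a,b)^\perp=(b,-a)$, and let $\vec\omega^m\in\underline V^h$ be defined by $(\vec\omega^m,\vec\varphi|\vec X^m_\rho|)^h=(\vec\nu^m,\vec\varphi|\vec X^m_\rho|)$ for all $\vec\varphi\in\underline V^h$. Assumption $(\mathfrak A)$: $|\vec X^m_\rho|>0$ a.e. on $I$ and $\vec X^m(\rho)\cdot\vec e_1>0$ for all $\rho\in\overline I\setminus\partial_0I$. Assumption $(\mathfrak B)^h$: the set $\{(\vec\nu^m,\chi|\vec X^m_\rho|)^h:\chi\in V^h\}\subset\mathbb R^2$ spans $\mathbb R^2$. For $\kappa\in V^h$, $\mathfrak K^m(\kappa)\in V^h$ is defined nodally by $\mathfrak K^m(\kappa)(q_j)=\frac{\vec\omega^m(q_j)\cdot\vec e_1}{\vec X^m(q_j)\cdot\vec e_1}$ if $q_j\in\overline I\setminus\partial_0I$ and $\mathfrak K^m(\kappa)(q_j)=-\kappa(q_j)$ if $q_j\in\partial_0I$. *)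

(* Defs.v *)
(* the scheme is a finite-dimensional algebraic problem;
   stated over an arbitrary real closed field R (sqrt needed for |X_rho|). *)
From HB Require Import structures.
From mathcomp Require Import all_boot all_order all_algebra.
Set Implicit Arguments. Unset Strict Implicit. Unset Printing Implicit Defensive.
Import Order.TTheory GRing.Theory Num.Theory.
Local Open Scope ring_scope.

(* Type of a boundary point p of I: p in d_D I, d_0 I, d_1 I or d_2 I. *)
Inductive bctype := BD | B0 | B1 | B2.

(* I = R/Z (no boundary) or I = (0,1) with the boundary type of rho=0 and rho=1. *)
Inductive domain := Periodic | Interval of bctype & bctype.

Section Defs.
Variable R : rcfType.
Variable J : nat.

Definition vec := (R * R)%type.
Definition dotv (u v : vec) : R := u.1 * v.1 + u.2 * v.2.
Definition nrm (u : vec) : R := Num.sqrt (dotv u u).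
Definition perpv (u : vec) : vec := (u.2, - u.1).
Definition addv (u v : vec) : vec := (u.1 + v.1, u.2 + v.2).
Definition scalev (a : R) (u : vec) : vec := (a * u.1, a * u.2).
Definition subv (u v : vec) : vec := addv u (scalev (-1) v).

Definition hh : R := (J%:R)^-1.

(* Nodes q_0..q_J are indexed by 'I_J.+1 (q_0 = q_J identified in the periodic
   case through the constraint in in_Vh); element e : 'I_J is [q_e, q_{e+1}]. *)
Definition lnode (e : 'I_J) : 'I_J.+1 := widen_ord (leqnSn J) e.
Definition rnode (e : 'I_J) : 'I_J.+1 := lift ord0 e.
(* one-sided endpoint of element e: false = q_e^+, true = q_{e+1}^- *)
Definition nd (e : 'I_J) (b : bool) : 'I_J.+1 := if b then rnode e else lnode e.

Definition bc_at (dom : domain) (j : 'I_J.+1) : option bctype :=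
  match dom with
  | Periodic => None
  | Interval bl br =>
      if (val j == 0)%N then Some bl else if (val j == J)%N then Some br else None
  end.

(* A function in V^h (resp. [V^h]^2) is given by its nodal values;
   periodicity means the value at q_0 equals the value at q_J. *)
Definition in_Vh {T : Type} (dom : domain) (f : 'I_J.+1 -> T) : Prop :=
  match dom with
  | Periodic => f ord0 = f ord_max
  | Interval _ _ => True
  end.

Definition in_Vh_d0 (dom : domain) (X : 'I_J.+1 -> vec) : Prop :=
  in_Vh dom X /\ (forall j, bc_at dom j = Some B0 -> (X j).1 = 0).

Definition in_Vh_d (dom : domain) (eta : 'I_J.+1 -> vec) : Prop :=
  in_Vh_d0 dom eta /\
  (forall j, (bc_at dom j = Some B1 -> (eta j).1 = 0) /\
             (bc_at dom j = Some B2 -> (eta j).2 = 0) /\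
             (bc_at dom j = Some BD -> eta j = (0, 0))).

(* A piecewise affine (possibly discontinuous at nodes) scalar function is
   described by its one-sided values F e false = F(q_e^+), F e true = F(q_{e+1}^-). *)
(* mass-lumped product (f,g)^h, applied to the product F = f g *)
Definition lump (F : 'I_J -> bool -> R) : R :=
  hh / 2%:R * \sum_(e < J) (F e true + F e false).
Definition lumpv (F : 'I_J -> bool -> vec) : vec :=
  (lump (fun e b => (F e b).1), lump (fun e b => (F e b).2)).

(* exact L^2(I) inner product of two piecewise affine functions:
   on an element, int f g = h/6 (2 f0 g0 + f0 g1 + f1 g0 + 2 f1 g1). *)
Definition l2pa (F G : 'I_J -> bool -> R) : R :=
  \sum_(e < J) hh / 6%:R *
     (2%:R * F e false * G e false + F e false * G e true
      + F e true * G e false + 2%:R * F e true * G e true).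
Definition l2v (F G : 'I_J -> bool -> vec) : R :=
  l2pa (fun e b => (F e b).1) (fun e b => (G e b).1)
  + l2pa (fun e b => (F e b).2) (fun e b => (G e b).2).

Definition Xrho (X : 'I_J.+1 -> vec) (e : 'I_J) : vec :=
  scalev hh^-1 (subv (X (rnode e)) (X (lnode e))).
Definition nu (X : 'I_J.+1 -> vec) (e : 'I_J) : vec :=
  scalev (- (nrm (Xrho X e))^-1) (perpv (Xrho X e)).

(* value of the piecewise linear X at the point q_e + t h of element e *)
Definition interp (X : 'I_J.+1 -> vec) (e : 'I_J) (t : R) : vec :=
  addv (scalev (1 - t) (X (lnode e))) (scalev t (X (rnode e))).

Definition assumptionA (dom : domain) (X : 'I_J.+1 -> vec) : Prop :=
  (forall e, 0 < nrm (Xrho X e)) /\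
  (forall e t, 0 <= t <= 1 ->
     ~ (t = 0 /\ bc_at dom (lnode e) = Some B0) ->
     ~ (t = 1 /\ bc_at dom (rnode e) = Some B0) ->
     0 < (interp X e t).1).

Definition nuchi (X : 'I_J.+1 -> vec) (chi : 'I_J.+1 -> R) : vec :=
  lumpv (fun e b => scalev (chi (nd e b) * nrm (Xrho X e)) (nu X e)).

(* Assumption (B)^h: the set {(nu, chi|X_rho|)^h : chi in V^h} spans R^2,
   i.e. every vector is a finite linear combination of its elements. *)
Definition assumptionB (dom : domain) (X : 'I_J.+1 -> vec) : Prop :=
  forall v : vec, exists s : seq (R * ('I_J.+1 -> R)),
    (forall i, (i < size s)%N -> in_Vh dom (nth (0, fun _ => 0) s i).2) /\
    v = foldr addv (0, 0) [seq scalev c.1 (nuchi X c.2) | c <- s].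

Definition omega_def (dom : domain) (X w : 'I_J.+1 -> vec) : Prop :=
  in_Vh dom w /\
  forall phi : 'I_J.+1 -> vec, in_Vh dom phi ->
    lump (fun e b => dotv (w (nd e b)) (scalev (nrm (Xrho X e)) (phi (nd e b))))
    = l2v (fun e _ => nu X e)
          (fun e b => scalev (nrm (Xrho X e)) (phi (nd e b))).

Definition Kop (dom : domain) (X w : 'I_J.+1 -> vec) (kappa : 'I_J.+1 -> R)
    (j : 'I_J.+1) : R :=
  match bc_at dom j with
  | Some B0 => - kappa j
  | _ => (w j).1 / (X j).1
  end.

Definition rho_at (rho0 rho1 : R) (j : 'I_J.+1) : R :=
  if (val j == 0)%N then rho0 else rho1.

(* sum_{i=1,2} sum_{p in d_i I} rho^{(p)} eta(p).e_{3-i} *)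
Definition bdry_term (dom : domain) (rho0 rho1 : R) (eta : 'I_J.+1 -> vec) : R :=
  \sum_(j < J.+1)
    match bc_at dom j with
    | Some B1 => rho_at rho0 rho1 j * (eta j).2
    | Some B2 => rho_at rho0 rho1 j * (eta j).1
    | _ => 0
    end.

Definition scheme (dom : domain) (rho0 rho1 : R) (X w : 'I_J.+1 -> vec) (dt : R)
    (dX : 'I_J.+1 -> vec) (kappa : 'I_J.+1 -> R) : Prop :=
  let X1 := fun j => addv (X j) (dX j) in
  (forall chi : 'I_J.+1 -> R, in_Vh dom chi ->
     lump (fun e b => dotv (scalev dt^-1 (subv (X1 (nd e b)) (X (nd e b))))
                           (scalev (chi (nd e b)) (nu X e)) * nrm (Xrho X e))
     = lump (fun e b => (kappa (nd e b) - Kop dom X w kappa (nd e b))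
                        * chi (nd e b) * nrm (Xrho X e))) /\
  (forall eta : 'I_J.+1 -> vec, in_Vh_d dom eta ->
     lump (fun e b => kappa (nd e b) * dotv (nu X e) (eta (nd e b)) * nrm (Xrho X e))
     + l2v (fun e _ => Xrho X1 e) (fun e _ => scalev (nrm (Xrho X e))^-1 (Xrho eta e))
     = - bdry_term dom rho0 rho1 eta).

End Defs.

(* Main.v *)
Require Import Defs.
From HB Require Import structures.
From mathcomp Require Import all_boot all_order all_algebra.
From mathcomp Require Import ring zify.
From Stdlib Require Import Classical FunctionalExtensionality.
Import Order.TTheory GRing.Theory Num.Theory.
Local Open Scope ring_scope.
Section Abs.
Variable F : fieldType.
Variable vT : vectType F.

Lemma vspace_step (U : {vspace vT}) x : x \notin U ->
  (\dim U < \dim (U + <[x]>))%N /\ (\dim (U + <[x]>) <= \dim {:vT})%N.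
Proof.
move=> /negP xU.
have sU : (U <= U + <[x]>)%VS by apply: addvSl.
have neq : (U != U + <[x]>)%VS.
  apply/negP => /eqP e; apply: xU; rewrite e; exact: (subvP (addvSr U <[x]>%VS) _ (memv_line x)).
split; last exact: dimvS (subvf _).
by have := dimv_leqif_eq sU; case => le e; rewrite ltn_neqAle le andbT e.
Qed.

Lemma vspace_of_pred (P : vT -> Prop) :
  P 0 -> (forall a x y, P x -> P y -> P (a *: x + y)) ->
  exists U : {vspace vT}, forall x, x \in U <-> P x.
Proof.
move=> P0 PL.
have key : forall m (U : {vspace vT}), (\dim {:vT} - \dim U <= m)%N ->
  (forall x, x \in U -> P x) -> exists U : {vspace vT}, forall x, x \in U <-> P x.
  elim=> [|m IH] U hd hU.
    case: (classic (forall x, P x -> x \in U)) => [h|].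
      by exists U => x; split; [exact: hU| exact: h].
    move=> nh; have [x nx] := not_all_ex_not _ _ nh; have [Px xU] := imply_to_and _ _ nx.
    have [h1 h2] := @vspace_step U x (negbT (introF idP xU)). move: hd h1 h2; lia.
  case: (classic (forall x, P x -> x \in U)) => [h|].
    by exists U => x; split; [exact: hU| exact: h].
  move=> nh; have [x nx] := not_all_ex_not _ _ nh; have [Px xU] := imply_to_and _ _ nx.
  have [h1 h2] := @vspace_step U x (negbT (introF idP xU)).
  apply: (IH (U + <[x]>)%VS).
    move: hd h1 h2; lia.
  move=> y /memv_addP [u uU [v /vlineP [k ->] ->]].
  rewrite addrC; apply: PL => //; exact: hU.
apply: (key (\dim {:vT}) 0%VS); first by rewrite leq_subr.
by move=> x; rewrite memv0 => /eqP ->.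
Qed.
End Abs.

Section Fred.
Variable F : fieldType.
Variable vT : vectType F.

Lemma lin0 (g : vT -> F) : (forall a x y, g (a *: x + y) = a * g x + g y) -> g 0 = 0.
Proof.
move=> hg; have := hg 1 0 0; rewrite scale1r addr0 mul1r => e.
by apply: (@addrI _ (g 0)); rewrite addr0 -e.
Qed.

Lemma lin_sum (g : vT -> F) n (k : 'I_n -> F) (X : 'I_n -> vT) :
  (forall a x y, g (a *: x + y) = a * g x + g y) ->
  g (\sum_(i < n) k i *: X i) = \sum_(i < n) k i * g (X i).
Proof.
move=> hg; elim: n k X => [|n IH] k X; first by rewrite !big_ord0 (lin0 _ hg).
by rewrite !big_ord_recl hg IH.
Qed.

Lemma fredholm (U : {vspace vT}) (B : vT -> vT -> F) (f : vT -> F) :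
  (forall a u1 u2 v, B (a *: u1 + u2) v = a * B u1 v + B u2 v) ->
  (forall a u v1 v2, B u (a *: v1 + v2) = a * B u v1 + B u v2) ->
  (forall a v1 v2, f (a *: v1 + v2) = a * f v1 + f v2) ->
  (forall u, u \in U -> (forall v, v \in U -> B u v = 0) -> u = 0) ->
  exists2 u, u \in U & forall v, v \in U -> B u v = f v.
Proof.
move=> hBl hBr hf hinj.
pose n := \dim U; pose b := vbasis U.
pose M : 'M[F]_n := \matrix_(i, j) B b`_i b`_j.
have bU : forall i : 'I_n, b`_i \in U.
  by move=> i; apply: vbasis_mem; apply: mem_nth; rewrite size_tuple.
have mkU : forall c : 'rV[F]_n, \sum_(i < n) c 0 i *: b`_i \in U.
  by move=> c; apply: memv_suml => i _; apply: memvZ.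
have Bub : forall (c : 'rV[F]_n) (j : 'I_n),
    B (\sum_(i < n) c 0 i *: b`_i) b`_j = (c *m M) 0 j.
  move=> c j; rewrite (@lin_sum (fun x => B x b`_j)); last by move=> *; apply: hBl.
  by rewrite !mxE; apply: eq_bigr => i _; rewrite mxE.
have ext : forall u (g : vT -> F), (forall a v1 v2, g (a *: v1 + v2) = a * g v1 + g v2) ->
    (forall j : 'I_n, B u b`_j = g b`_j) -> forall v, v \in U -> B u v = g v.
  move=> u g hg hj v vU; rewrite (coord_vbasis vU).
  rewrite (@lin_sum (B u)); last by move=> *; apply: hBr.
  rewrite (lin_sum _ _ _ _ hg); apply: eq_bigr => i _; by rewrite hj.
have inj : forall c : 'rV[F]_n, c *m M = 0 -> c = 0.
  move=> c hc.
  have g0 : forall a (v1 v2 : vT), (fun _ : vT => 0 : F) (a *: v1 + v2)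
      = a * (fun _ : vT => 0 : F) v1 + (fun _ : vT => 0 : F) v2.
    by move=> *; rewrite mulr0 addr0.
  have hj : forall j : 'I_n, B (\sum_(i < n) c 0 i *: b`_i) b`_j = 0.
    by move=> j; rewrite Bub hc mxE.
  have h0 := hinj _ (mkU c) (ext _ _ g0 hj).
  have := (freeP (basis_free (vbasisP U))) (fun i => c 0 i) h0.
  by move=> hk; apply/rowP => i; rewrite hk mxE.
have Mu : M \in unitmx.
  rewrite -row_free_unit -kermx_eq0; apply/eqP/row_matrixP => i.
  rewrite row0; apply: inj; apply/sub_kermxP; exact: row_sub.
pose r : 'rV[F]_n := \row_j f b`_j.
pose c := r *m invmx M.
exists (\sum_(i < n) c 0 i *: b`_i); first exact: mkU.
apply: ext => // j; rewrite Bub /c mulmxKV // mxE //.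
Qed.
End Fred.

Section Gen.
Variable R : rcfType.
Variable J : nat.

Lemma lump_ext (F G : 'I_J -> bool -> R) :
  (forall e b, F e b = G e b) -> lump F = lump G.
Proof. by move=> h; rewrite /lump; congr (_ * _); apply: eq_bigr => e _; rewrite !h. Qed.

Lemma lump_lin (a : R) (F1 F2 F3 : 'I_J -> bool -> R) :
  (forall e b, F1 e b = a * F2 e b + F3 e b) -> lump F1 = a * lump F2 + lump F3.
Proof.
move=> h; rewrite /lump.
rewrite (eq_bigr (fun e => a * (F2 e true + F2 e false) + (F3 e true + F3 e false)));
  last by move=> e _; rewrite !h; ring.
rewrite big_split /= -mulr_sumr; ring.
Qed.

Lemma lump0 (F : 'I_J -> bool -> R) : (forall e b, F e b = 0) -> lump F = 0.
Proof.
move=> h; rewrite /lump big1 ?mulr0 // => e _; rewrite !h; ring.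
Qed.

Lemma hh_ge0 : 0 <= hh R J.
Proof. by rewrite /hh invr_ge0 ler0n. Qed.

Lemma lump_ge0 (F : 'I_J -> bool -> R) : (forall e b, 0 <= F e b) -> 0 <= lump F.
Proof.
move=> h; rewrite /lump; apply: mulr_ge0.
  by apply: divr_ge0; [exact: hh_ge0| exact: ler0n].
by apply: sumr_ge0 => e _; apply: addr_ge0.
Qed.

Lemma lump_eq0 (F : 'I_J -> bool -> R) : (0 < J)%N ->
  (forall e b, 0 <= F e b) -> lump F = 0 -> forall e b, F e b = 0.
Proof.
move=> J0 h; rewrite /lump => /eqP; rewrite mulf_eq0 => /orP [].
  rewrite /hh mulf_eq0 invr_eq0 pnatr_eq0 invr_eq0 pnatr_eq0 /=.
  by move: J0; case: J F h => //.
move/eqP/psumr_eq0P => hs e b.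
have := hs (fun i _ => addr_ge0 (h i true) (h i false)) e isT.
move/eqP; rewrite paddr_eq0 ?h // => /andP [/eqP h1 /eqP h2].
by case: b.
Qed.

Lemma l2pa_linl (a : R) (F1 F2 F3 G : 'I_J -> bool -> R) :
  (forall e b, F1 e b = a * F2 e b + F3 e b) -> l2pa F1 G = a * l2pa F2 G + l2pa F3 G.
Proof.
move=> h; rewrite /l2pa mulr_sumr -big_split /=; apply: eq_bigr => e _; rewrite !h; ring.
Qed.

Lemma l2pa_linr (a : R) (F G1 G2 G3 : 'I_J -> bool -> R) :
  (forall e b, G1 e b = a * G2 e b + G3 e b) -> l2pa F G1 = a * l2pa F G2 + l2pa F G3.
Proof.
move=> h; rewrite /l2pa mulr_sumr -big_split /=; apply: eq_bigr => e _; rewrite !h; ring.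
Qed.

Lemma l2v_linl (a : R) (F1 F2 F3 G : 'I_J -> bool -> vec R) :
  (forall e b, F1 e b = Defs.addv (scalev a (F2 e b)) (F3 e b)) ->
  l2v F1 G = a * l2v F2 G + l2v F3 G.
Proof.
move=> h; rewrite /l2v (@l2pa_linl a (fun e b => (F1 e b).1) (fun e b => (F2 e b).1) (fun e b => (F3 e b).1));
  last by move=> e b /=; rewrite h.
rewrite (@l2pa_linl a (fun e b => (F1 e b).2) (fun e b => (F2 e b).2) (fun e b => (F3 e b).2));
  last by move=> e b /=; rewrite h.
ring.
Qed.

Lemma l2v_linr (a : R) (F G1 G2 G3 : 'I_J -> bool -> vec R) :
  (forall e b, G1 e b = Defs.addv (scalev a (G2 e b)) (G3 e b)) ->
  l2v F G1 = a * l2v F G2 + l2v F G3.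
Proof.
move=> h; rewrite /l2v (@l2pa_linr a _ (fun e b => (G1 e b).1) (fun e b => (G2 e b).1) (fun e b => (G3 e b).1));
  last by move=> e b /=; rewrite h.
rewrite (@l2pa_linr a _ (fun e b => (G1 e b).2) (fun e b => (G2 e b).2) (fun e b => (G3 e b).2));
  last by move=> e b /=; rewrite h.
ring.
Qed.

End Gen.

Section Main.
Variable R : rcfType.
Variable J : nat.
Variable dom : domain.
Variables (rho0 rho1 : R) (X w : 'I_J.+1 -> R * R) (dt : R).

Definition vT := {ffun 'I_J.+1 -> (R^o * R^o) * R^o}.
Definition dXof (u : vT) : 'I_J.+1 -> vec R := fun j => (u j).1.
Definition kof (u : vT) : 'I_J.+1 -> R := fun j => (u j).2.
Definition toV (p : ('I_J.+1 -> vec R) * ('I_J.+1 -> R)) : vT :=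
  [ffun j => ((p.1 j : R^o * R^o), (p.2 j : R^o))].
Local Notation Nm e := (nrm (Xrho X e)).

Lemma scaleRo (a x : R) : a *: (x : R^o) = a * x. Proof. by []. Qed.
Definition Kh (k : 'I_J.+1 -> R) j : R :=
  match bc_at dom j with Some B0 => - k j | _ => 0 end.
Definition cst j : R :=
  match bc_at dom j with Some B0 => 0 | _ => (w j).1 / (X j).1 end.

Lemma KopE k j : Kop dom X w k j = Kh k j + cst j.
Proof. by rewrite /Kop /Kh /cst; case: (bc_at dom j) => [[]|] /=; ring. Qed.

Definition P1 (u v : vT) := lump (fun e b =>
  dotv (dXof u (nd e b)) (scalev (kof v (nd e b)) (nu X e)) * Nm e).
Definition P2 (u v : vT) := lump (fun e b =>
  (kof u (nd e b) - Kh (kof u) (nd e b)) * kof v (nd e b) * Nm e).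
Definition P3 (u v : vT) := lump (fun e b =>
  kof u (nd e b) * dotv (nu X e) (dXof v (nd e b)) * Nm e).
Definition P4 (u v : vT) := l2v (fun e _ => Xrho (dXof u) e)
  (fun e _ => scalev (Nm e)^-1 (Xrho (dXof v) e)).
Definition Bf u v := - P1 u v + dt * P2 u v + P3 u v + P4 u v.
Definition ff v := dt * lump (fun e b => cst (nd e b) * kof v (nd e b) * Nm e)
  - bdry_term dom rho0 rho1 (dXof v)
  - l2v (fun e _ => Xrho X e) (fun e _ => scalev (Nm e)^-1 (Xrho (dXof v) e)).

Ltac crush := rewrite /dXof /kof /Xrho /subv /scalev /Defs.addv /dotv /nu /perpv ?ffunE /= ?scaleRo;
  first [congr pair; ring | ring].
Ltac crushK := rewrite /Kh; case: (bc_at dom _) => [[]|]; crush.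

Lemma P1_linl a u1 u2 v : P1 (a *: u1 + u2) v = a * P1 u1 v + P1 u2 v.
Proof. by apply: lump_lin => e b; crush. Qed.
Lemma P1_linr a u v1 v2 : P1 u (a *: v1 + v2) = a * P1 u v1 + P1 u v2.
Proof. by apply: lump_lin => e b; crush. Qed.
Lemma P2_linl a u1 u2 v : P2 (a *: u1 + u2) v = a * P2 u1 v + P2 u2 v.
Proof. by apply: lump_lin => e b; crushK. Qed.
Lemma P2_linr a u v1 v2 : P2 u (a *: v1 + v2) = a * P2 u v1 + P2 u v2.
Proof. by apply: lump_lin => e b; crushK. Qed.
Lemma P3_linl a u1 u2 v : P3 (a *: u1 + u2) v = a * P3 u1 v + P3 u2 v.
Proof. by apply: lump_lin => e b; crush. Qed.
Lemma P3_linr a u v1 v2 : P3 u (a *: v1 + v2) = a * P3 u v1 + P3 u v2.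
Proof. by apply: lump_lin => e b; crush. Qed.
Lemma P4_linl a u1 u2 v : P4 (a *: u1 + u2) v = a * P4 u1 v + P4 u2 v.
Proof. by apply: l2v_linl => e b; crush. Qed.
Lemma P4_linr a u v1 v2 : P4 u (a *: v1 + v2) = a * P4 u v1 + P4 u v2.
Proof. by apply: l2v_linr => e b; crush. Qed.
Lemma S_linr a v1 v2 : l2v (fun e _ => Xrho X e) (fun e _ => scalev (Nm e)^-1 (Xrho (dXof (a *: v1 + v2)) e))
  = a * l2v (fun e _ => Xrho X e) (fun e _ => scalev (Nm e)^-1 (Xrho (dXof v1) e))
    + l2v (fun e _ => Xrho X e) (fun e _ => scalev (Nm e)^-1 (Xrho (dXof v2) e)).
Proof. by apply: l2v_linr => e b; crush. Qed.
Lemma bdry_lin a v1 v2 : bdry_term dom rho0 rho1 (dXof (a *: v1 + v2))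
  = a * bdry_term dom rho0 rho1 (dXof v1) + bdry_term dom rho0 rho1 (dXof v2).
Proof.
rewrite /bdry_term mulr_sumr -big_split; apply: eq_bigr => j _ /=.
case: (bc_at dom j) => [[]|]; crush.
Qed.
Lemma C_lin a v1 v2 : lump (fun e b => cst (nd e b) * kof (a *: v1 + v2) (nd e b) * Nm e)
  = a * lump (fun e b => cst (nd e b) * kof v1 (nd e b) * Nm e)
    + lump (fun e b => cst (nd e b) * kof v2 (nd e b) * Nm e).
Proof. by apply: lump_lin => e b; crush. Qed.

Lemma Bf_linl a u1 u2 v : Bf (a *: u1 + u2) v = a * Bf u1 v + Bf u2 v.
Proof. rewrite /Bf P1_linl P2_linl P3_linl P4_linl; ring. Qed.
Lemma Bf_linr a u v1 v2 : Bf u (a *: v1 + v2) = a * Bf u v1 + Bf u v2.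
Proof. rewrite /Bf P1_linr P2_linr P3_linr P4_linr; ring. Qed.
Lemma ff_lin a v1 v2 : ff (a *: v1 + v2) = a * ff v1 + ff v2.
Proof. rewrite /ff C_lin bdry_lin S_linr; ring. Qed.

Definition Pu (u : vT) := in_Vh_d dom (dXof u) /\ in_Vh dom (kof u).

Lemma dXof_toV p : dXof (toV p) = p.1.
Proof. by apply: functional_extensionality => j; rewrite /dXof ffunE. Qed.
Lemma kof_toV p : kof (toV p) = p.2.
Proof. by apply: functional_extensionality => j; rewrite /kof ffunE. Qed.

Lemma Vh_zero (T : Type) (z : T) : in_Vh dom (fun _ : 'I_J.+1 => z).
Proof. by case: dom. Qed.
Lemma Vhd_zero : in_Vh_d dom (fun _ : 'I_J.+1 => ((0 : R), (0 : R))).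
Proof. by split; [split; [apply: Vh_zero| done] | done]. Qed.

Lemma Pu0 : Pu 0.
Proof.
have e1 : dXof 0 = fun _ => (0, 0) by apply: functional_extensionality => j; rewrite /dXof ffunE.
have e2 : kof 0 = fun _ => 0 by apply: functional_extensionality => j; rewrite /kof ffunE.
by rewrite /Pu e1 e2; split; [exact: Vhd_zero | exact: Vh_zero].
Qed.

Lemma PuL a x y : Pu x -> Pu y -> Pu (a *: x + y).
Proof.
rewrite /Pu /in_Vh_d /in_Vh_d0 /in_Vh.
move=> [[[hx0 hx1] hx2] hx3] [[[hy0 hy1] hy2] hy3].
split; first split; first split.
- move: hx0 hy0 hx3 hy3; case: dom => //.
  rewrite /dXof => h1 h2 _ _; by rewrite !ffunE /= h1 h2.
- move=> j hj; move: (hx1 j hj) (hy1 j hj); rewrite /dXof !ffunE /= => -> ->; by rewrite ?scaleRo mulr0 addr0.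
- move=> j; have [a1 [a2 a3]] := hx2 j; have [b1 [b2 b3]] := hy2 j.
  split; [|split].
  + move=> hj; move: (a1 hj) (b1 hj); rewrite /dXof !ffunE /= => -> ->; by rewrite ?scaleRo mulr0 addr0.
  + move=> hj; move: (a2 hj) (b2 hj); rewrite /dXof !ffunE /= => -> ->; by rewrite ?scaleRo mulr0 addr0.
  + move=> hj; move: (a3 hj) (b3 hj); rewrite /dXof !ffunE /= => e1 e2.
    by rewrite e1 e2 /= scaler0 addr0.
- move: hx3 hy3 hx0 hy0; case: dom => //.
  rewrite /kof => h1 h2 _ _; by rewrite !ffunE /= h1 h2.
Qed.

Definition vchi (chi : 'I_J.+1 -> R) : vT := toV (fun _ => ((0 : R), (0 : R)), chi).
Definition veta (eta : 'I_J.+1 -> vec R) : vT := toV (eta, fun _ => (0 : R)).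
Definition Sv v := l2v (fun e _ => Xrho X e) (fun e _ => scalev (Nm e)^-1 (Xrho (dXof v) e)).
Definition Cv v := lump (fun e b => cst (nd e b) * kof v (nd e b) * Nm e).

Lemma l2v0r (F G : 'I_J -> bool -> vec R) : (forall e b, G e b = (0, 0)) -> l2v F G = 0.
Proof.
move=> h; rewrite /l2v /l2pa !big1 ?addr0 // => e _; rewrite !h /=; ring.
Qed.

Lemma Bf_chi u chi : Bf u (vchi chi) = - P1 u (vchi chi) + dt * P2 u (vchi chi).
Proof.
rewrite /Bf /P3 /P4 lump0 ?l2v0r ?addr0 // => e b; crush.
Qed.
Lemma ff_chi chi : ff (vchi chi) = dt * Cv (vchi chi).
Proof.
rewrite /ff -/(Sv _) -/(Cv _).
have -> : Sv (vchi chi) = 0 by rewrite /Sv l2v0r // => e b; crush.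
have -> : bdry_term dom rho0 rho1 (dXof (vchi chi)) = 0.
  rewrite /bdry_term big1 // => j _; rewrite /vchi dXof_toV /=.
  by case: (bc_at dom j) => [[]|] /=; rewrite ?mulr0.
ring.
Qed.
Lemma Bf_eta u eta : Bf u (veta eta) = P3 u (veta eta) + P4 u (veta eta).
Proof.
rewrite /Bf /P1 /P2 (@lump0 _ _ (fun e b => _ * Nm e)); last by move=> e b; crush.
rewrite (@lump0 _ _ (fun e b => _ * Nm e)); last by move=> e b; crush.
ring.
Qed.
Lemma ff_eta eta : ff (veta eta) = - bdry_term dom rho0 rho1 eta - Sv (veta eta).
Proof.
rewrite /ff -/(Sv _) -/(Cv _) /veta dXof_toV /=.
have -> : Cv (toV (eta, fun _ => 0)) = 0 by rewrite /Cv lump0 // => e b; crush.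
ring.
Qed.

Lemma split_v v : v = 1 *: veta (dXof v) + vchi (kof v).
Proof.
apply/ffunP => j; rewrite !ffunE /= /dXof /kof.
case: (v j) => [[a b] c] /=.
apply/eqP; rewrite !xpair_eqE /= !scaleRo; apply/andP; split; [apply/andP; split|];
  apply/eqP; ring.
Qed.

Lemma E1 u chi : lump (fun e b => dotv (scalev dt^-1
     (subv ((fun j => Defs.addv (X j) (dXof u j)) (nd e b)) (X (nd e b))))
     (scalev (chi (nd e b)) (nu X e)) * nrm (Xrho X e)) = dt^-1 * P1 u (vchi chi).
Proof.
rewrite /P1 -[RHS]addr0 -(@lump0 R J (fun _ _ => 0) (fun _ _ => erefl)).
by apply: lump_lin => e b; crush.
Qed.

Lemma E2 u chi : lump (fun e b => (kof u (nd e b) - Kop dom X w (kof u) (nd e b))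
     * chi (nd e b) * nrm (Xrho X e)) = P2 u (vchi chi) - Cv (vchi chi).
Proof.
transitivity (-1 * Cv (vchi chi) + P2 u (vchi chi)); last ring.
rewrite /Cv /P2; apply: lump_lin => e b; rewrite KopE; crushK.
Qed.

Lemma E3 u eta : lump (fun e b => kof u (nd e b) * dotv (nu X e) (eta (nd e b)) * nrm (Xrho X e))
  + l2v (fun e _ => Xrho (fun j => Defs.addv (X j) (dXof u j)) e)
        (fun e _ => scalev (nrm (Xrho X e))^-1 (Xrho eta e))
  = P3 u (veta eta) + P4 u (veta eta) + Sv (veta eta).
Proof.
have -> : lump (fun e b => kof u (nd e b) * dotv (nu X e) (eta (nd e b)) * nrm (Xrho X e))
   = P3 u (veta eta) by rewrite /P3; apply: lump_ext => e b; crush.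
rewrite /P4 /Sv /veta dXof_toV /=.
rewrite (@l2v_linl _ _ 1 _ (fun e _ => Xrho (dXof u) e) (fun e _ => Xrho X e)); last by move=> e b; crush.
ring.
Qed.

Lemma scheme_iff u : dt != 0 ->
  (scheme dom rho0 rho1 X w dt (dXof u) (kof u) <-> forall v, Pu v -> Bf u v = ff v).
Proof.
move=> dt0; rewrite /scheme; split.
  move=> [h1 h2] v [pv1 pv2].
  have c1 : Bf u (vchi (kof v)) = ff (vchi (kof v)).
    have := h1 _ pv2; rewrite E1 E2 Bf_chi ff_chi => H.
    have -> : P1 u (vchi (kof v)) = dt * (P2 u (vchi (kof v)) - Cv (vchi (kof v))).
      by rewrite -H mulrA mulfV // mul1r.
    ring.
  have c2 : Bf u (veta (dXof v)) = ff (veta (dXof v)).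
    have := h2 _ pv1; rewrite E3 Bf_eta ff_eta => H.
    by rewrite -H; ring.
  by rewrite (split_v v) Bf_linr ff_lin c1 c2.
move=> h; split.
  move=> chi hchi.
  have pv : Pu (vchi chi).
    by rewrite /Pu /vchi dXof_toV kof_toV; split; [exact: Vhd_zero| exact: hchi].
  have := h _ pv; rewrite Bf_chi ff_chi => H.
  rewrite E1 E2.
  apply: (mulfI dt0); rewrite mulrA mulfV // mul1r; move: H; rewrite mulrBr => H.
  apply/eqP; rewrite -subr_eq0 -H; apply/eqP; ring.
move=> eta heta.
have pv : Pu (veta eta).
  by rewrite /Pu /veta dXof_toV kof_toV; split; [exact: heta| exact: Vh_zero].
have := h _ pv; rewrite Bf_eta ff_eta => H.
by rewrite E3 H; ring.
Qed.

Lemma lump_scale a (F : 'I_J -> bool -> R) : lump (fun e b => a * F e b) = a * lump F.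
Proof.
by rewrite -[RHS]addr0 -(@lump0 R J (fun _ _ => 0) (fun _ _ => erefl)); apply: lump_lin => e b; ring.
Qed.

Lemma l2pa_const (f g : 'I_J -> R) :
  l2pa (fun e _ => f e) (fun e _ => g e) = \sum_(e < J) hh R J * (f e * g e).
Proof.
rewrite /l2pa; apply: eq_bigr => e _.
have h6 : (6%:R : R) != 0 by rewrite pnatr_eq0.
by field.
Qed.

Lemma pair_eq (p q : vec R) : p.1 = q.1 -> p.2 = q.2 -> p = q.
Proof. by case: p q => [? ?] [? ?] /= -> ->. Qed.

Lemma node_cover : (0 < J)%N -> forall j : 'I_J.+1, exists e b, nd e b = j.
Proof.
move=> J0 j; case: (ltnP j J) => hj.
  by exists (Ordinal hj), false; apply: val_inj.
have hJ : (J.-1 < J)%N by rewrite prednK.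
exists (Ordinal hJ), true; apply: val_inj => /=.
rewrite /bump /= add1n prednK //; have := ltn_ord j; lia.
Qed.

Lemma sq0 (x y : R) : x * x + y * y = 0 -> x = 0 /\ y = 0.
Proof.
rewrite -!expr2 => /eqP; rewrite paddr_eq0 ?sqr_ge0 //.
by rewrite !sqrf_eq0 => /andP [/eqP -> /eqP ->].
Qed.

Lemma foldr_dot d (s : seq (R * ('I_J.+1 -> R))) :
  (forall chi, in_Vh dom chi -> dotv d (nuchi X chi) = 0) ->
  (forall i, (i < size s)%N -> in_Vh dom (nth (0, fun _ => 0) s i).2) ->
  dotv d (foldr (@Defs.addv R) (0, 0) [seq scalev c.1 (nuchi X c.2) | c <- s]) = 0.
Proof.
move=> hd; elim: s => [|c s IH] hs; first by rewrite /dotv /=; ring.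
have h0 := hd _ (hs 0%N isT).
have h1 := IH (fun i hi => hs i.+1 hi).
rewrite map_cons [foldr _ _ (_ :: _)]/=.
move: (nuchi X c.2) (foldr (@Defs.addv R) (0, 0) _) h0 h1 => x y h0 h1.
move: h0 h1; rewrite /dotv /Defs.addv /scalev /= => h0 h1.
transitivity (c.1 * (d.1 * x.1 + d.2 * x.2) + (d.1 * y.1 + d.2 * y.2)); first ring.
by rewrite h0 h1; ring.
Qed.

Lemma scalev1 (a : R) (v : vec R) : (scalev a v).1 = a * v.1. Proof. by []. Qed.
Lemma scalev2 (a : R) (v : vec R) : (scalev a v).2 = a * v.2. Proof. by []. Qed.

Lemma term_ge0 (x n : R) : 0 < hh R J -> 0 < n -> 0 <= hh R J * (x * (n^-1 * x)).
Proof.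
move=> h0 n0; apply: mulr_ge0; first exact: ltW.
by rewrite mulrCA; apply: mulr_ge0; [rewrite invr_ge0 ltW | rewrite -expr2 sqr_ge0].
Qed.

Lemma term_eq0 (x n : R) : 0 < hh R J -> 0 < n -> hh R J * (x * (n^-1 * x)) = 0 -> x = 0.
Proof.
move=> h0 n0 /eqP; rewrite mulf_eq0 (gt_eqF h0) /= mulrCA mulf_eq0 invr_eq0 (gt_eqF n0) /=.
by rewrite mulf_eq0 orbb => /eqP.
Qed.

Lemma Bf_inj u : (0 < J)%N -> 0 < dt -> (forall e, 0 < Nm e) -> assumptionB dom X ->
  Pu u -> (forall v, Pu v -> Bf u v = 0) -> u = 0.
Proof.
move=> J0 dt0 N0 hB pu hu.
have hh0 : 0 < hh R J by rewrite /hh invr_gt0 ltr0n.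
have Buu := hu u pu.
have P13 : P1 u u = P3 u u by rewrite /P1 /P3; apply: lump_ext => e b; crush.
have P2ge : forall e b, 0 <= (kof u (nd e b) - Kh (kof u) (nd e b)) * kof u (nd e b) * Nm e.
  move=> e b; apply: mulr_ge0; last exact: ltW.
  rewrite /Kh; case: (bc_at dom _) => [[]|]; rewrite ?opprK ?subr0 -?expr2 ?sqr_ge0 //.
  by rewrite mulrDl -expr2 addr_ge0 ?sqr_ge0.
have P4E : P4 u u = \sum_(e < J) hh R J * ((Xrho (dXof u) e).1 * ((Nm e)^-1 * (Xrho (dXof u) e).1))
   + \sum_(e < J) hh R J * ((Xrho (dXof u) e).2 * ((Nm e)^-1 * (Xrho (dXof u) e).2)).
  by rewrite /P4 /l2v !l2pa_const.
have S1ge : 0 <= \sum_(e < J) hh R J * ((Xrho (dXof u) e).1 * ((Nm e)^-1 * (Xrho (dXof u) e).1)).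
  by apply: sumr_ge0 => e _; apply: term_ge0.
have S2ge : 0 <= \sum_(e < J) hh R J * ((Xrho (dXof u) e).2 * ((Nm e)^-1 * (Xrho (dXof u) e).2)).
  by apply: sumr_ge0 => e _; apply: term_ge0.
have dtP2 : 0 <= dt * P2 u u by apply: mulr_ge0; [exact: ltW| exact: lump_ge0].
have : dt * P2 u u + P4 u u = 0 by rewrite -Buu /Bf P13; ring.
move/eqP; rewrite paddr_eq0 // ?P4E ?addr_ge0 // => /andP [/eqP hP2 /eqP hP4].
move: hP4; move/eqP; rewrite paddr_eq0 // => /andP [/eqP hS1 /eqP hS2].
have x1 : forall e, (Xrho (dXof u) e).1 = 0.
  move=> e; apply: (term_eq0 _ _ hh0 (N0 e)).
  by apply: (psumr_eq0P _ hS1) => // i _; apply: term_ge0.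
have x2 : forall e, (Xrho (dXof u) e).2 = 0.
  move=> e; apply: (term_eq0 _ _ hh0 (N0 e)).
  by apply: (psumr_eq0P _ hS2) => // i _; apply: term_ge0.
have hP2' : P2 u u = 0.
  by move/eqP: hP2; rewrite mulf_eq0 (gt_eqF dt0) /= => /eqP.
have k0 : forall j, kof u j = 0.
  move=> j; have [e [b <-]] := node_cover J0 j.
  have := @lump_eq0 R J (fun e b => (kof u (nd e b) - Kh (kof u) (nd e b)) * kof u (nd e b) * Nm e) J0 P2ge hP2' e b.
  have n0 := N0 e; move: (P2ge e b).
  rewrite /Kh; case: (bc_at dom _) => [[]|] _; rewrite ?opprK ?subr0 => /eqP;
    rewrite mulf_eq0 (gt_eqF n0) orbF ?mulf_eq0 ?orbb //.
  all: try by move/eqP.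
  by move=> /orP [|/eqP //]; rewrite -mulr2n -mulr_natl mulf_eq0 pnatr_eq0 /= => /eqP.
have dXe : forall e, dXof u (rnode e) = dXof u (lnode e).
  move=> e; have := x1 e; have := x2 e.
  rewrite /Xrho scalev1 scalev2 /subv /Defs.addv /scalev /= => h2 h1.
  apply: pair_eq; apply/eqP; rewrite -subr_eq0 -mulN1r.
    by move/eqP: h1; rewrite mulf_eq0 invr_eq0 (gt_eqF hh0).
  by move/eqP: h2; rewrite mulf_eq0 invr_eq0 (gt_eqF hh0).
have dXc : forall j, dXof u j = dXof u ord0.
  suff H : forall n (h : (n < J.+1)%N), dXof u (Ordinal h) = dXof u ord0.
    by move=> j; rewrite -(H _ (ltn_ord j)); congr (dXof u _); apply: val_inj.
  elim=> [|n IH] h; first by congr (dXof u _); apply: val_inj.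
  have hn : (n < J)%N by [].
  have hn1 : (n < J.+1)%N by apply: ltnW.
  have := dXe (Ordinal hn).
  rewrite (_ : rnode _ = Ordinal h); last by apply: val_inj.
  rewrite (_ : lnode _ = Ordinal hn1); last by apply: val_inj.
  by move=> ->; rewrite IH.
set d0 := dXof u ord0.
have hd : forall chi, in_Vh dom chi -> dotv d0 (nuchi X chi) = 0.
  move=> chi hchi.
  have pv : Pu (vchi chi).
    by rewrite /Pu /vchi dXof_toV kof_toV; split; [exact: Vhd_zero| exact: hchi].
  have := hu _ pv; rewrite Bf_chi.
  have -> : P2 u (vchi chi) = 0.
    by rewrite /P2; apply: lump0 => e b; rewrite /Kh !k0; case: (bc_at dom _) => [[]|]; ring.
  have -> : P1 u (vchi chi) = dotv d0 (nuchi X chi).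
    rewrite /nuchi /lumpv /dotv /= -!lump_scale /P1.
    rewrite -[X in _ = X + _]mul1r.
    by apply: lump_lin => e b; rewrite dXc -/d0; crush.
  by rewrite mulr0 addr0 => /eqP; rewrite oppr_eq0 => /eqP.
have d00 : d0 = (0, 0).
  have [s [hs hs2]] := hB d0.
  have := @foldr_dot d0 s hd hs; rewrite -hs2 /dotv => /sq0 [h1 h2].
  by apply: pair_eq.
apply/ffunP => j; rewrite !ffunE.
have h1 : (u j).1 = (0, 0) by rewrite -d00 /d0 -(dXc j).
have h2 : (u j).2 = 0 by exact: k0.
by move: h1 h2; case: (u j) => [[a b] c] /= [-> ->] ->.
Qed.

Lemma main_thm : (3 <= J)%N -> assumptionA dom X -> assumptionB dom X -> 0 < dt ->
  exists! p : ('I_J.+1 -> R * R) * ('I_J.+1 -> R),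
    [/\ in_Vh_d dom p.1, in_Vh dom p.2 & scheme dom rho0 rho1 X w dt p.1 p.2].
Proof.
move=> J3 [hA _] hB dt0.
have J0 : (0 < J)%N by apply: leq_trans J3.
have dtn : dt != 0 by rewrite gt_eqF.
have [U hU] := @vspace_of_pred _ _ Pu Pu0 PuL.
have injU : forall u, u \in U -> (forall v, v \in U -> Bf u v = 0) -> u = 0.
  move=> u uU h; apply: (Bf_inj _ J0 dt0 hA hB); first by apply/hU.
  by move=> v pv; apply: h; apply/hU.
have [u uU hu] := @fredholm _ _ U Bf ff Bf_linl Bf_linr ff_lin injU.
have pu : Pu u by apply/hU.
have su : forall v, Pu v -> Bf u v = ff v by move=> v pv; apply: hu; apply/hU.
exists (dXof u, kof u); split.
  by case: pu => p1 p2; split => //; apply/(scheme_iff u dtn).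
move=> [d k] /= [h1 h2 h3].
have e1 := dXof_toV (d, k); have e2 := kof_toV (d, k).
move: h1 h2 h3; rewrite -[d]/((d, k).1) -[k]/((d, k).2) -e1 -e2 => h1 h2 h3.
have su' := proj1 (scheme_iff (toV (d, k)) dtn) h3.
have pw : Pu ((-1) *: u + toV (d, k)).
  by apply: PuL => //; split.
have w0 := injU _ (proj2 (hU _) pw) (fun v hv => etrans (Bf_linl _ _ _ _)
   (eq_trans (f_equal2 (fun a b => -1 * a + b) (su v (proj1 (hU v) hv)) (su' v (proj1 (hU v) hv)))
     (etrans (f_equal (fun x => x + ff v) (mulN1r _)) (addNr _)))).
have uu : toV (d, k) = u.
  by move/eqP: w0; rewrite scaleN1r addrC subr_eq0 => /eqP.
by rewrite uu.
Qed.
End Main.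

Theorem lemma4p1 (R : rcfType) (J : nat) (dom : domain) (rho0 rho1 : R)
    (X w : 'I_J.+1 -> R * R) (dt : R) :
  (3 <= J)%N -> `|rho0| <= 1 -> `|rho1| <= 1 ->
  in_Vh_d0 dom X -> assumptionA dom X -> assumptionB dom X ->
  omega_def dom X w -> 0 < dt ->
  exists! p : ('I_J.+1 -> R * R) * ('I_J.+1 -> R),
    [/\ in_Vh_d dom p.1, in_Vh dom p.2 & scheme dom rho0 rho1 X w dt p.1 p.2].
Proof.
move=> J3 _ _ _ hA hB _ dt0.
exact: (@main_thm R J dom rho0 rho1 X w dt J3 hA hB dt0).
Qed.
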